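(* Let $s_1<\dots<s_n$ be reals and $Z(n,d)\subseteq\mathbb{R}^d$ the cyclic zonotope they define. The poset of proper faces of $Z(n,d)$, ordered by inclusion, is isomorphic to the induced subposet of $\Lambda_n$ consisting of those $\lambda$ with $m(\lambda)\le d-1$.
   Context: $Z(n,d)=\{\sum_{i=1}^n c_iu_i:0\le c_i\le1\}$ with $u_i=(1,s_i,\dots,s_i^{d-1})$. Proper faces are the nonempty faces different from $Z(n,d)$. $\Lambda_n=\{0,+,-\}^n$, partially ordered componentwise by the order on $\{0,+,-\}$ with relations $+<0$ and $-<0$ (and $+,-$ incomparable). For $\lambda=(\lambda_1,\dots,\lambda_n)\in\Lambda_n$: an even gap is a pair of indices $i<j$ with $\lambda_i,\lambda_j$ nonzero of opposite signs, $\lambda_r=0$ for all $i<r<j$, and $j-i-1$ even (possibly zero); an odd gap is a pair $i<j$ with $\lambda_i,\lambda_j$ nonzero of the same sign, $\lambda_r=0$ for all $i<r<j$, and $j-i-1$ odd. $m(\lambda)$ is the number of even gaps plus the number of odd gaps plus the number of zero entries of $\lambda$. *)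

(* Defs.v *)
From HB Require Import structures.
From mathcomp Require Import all_boot all_order all_algebra.
Set Implicit Arguments. Unset Strict Implicit. Unset Printing Implicit Defensive.
Import Order.TTheory GRing.Theory Num.Theory.
Local Open Scope ring_scope.

Inductive sign := Zero | Plus | Minus.

Definition sign_eqb (a b : sign) : bool :=
  match a, b with
  | Zero, Zero | Plus, Plus | Minus, Minus => true
  | _, _ => false
  end.

Lemma sign_eqP : Equality.axiom sign_eqb.
Proof. by case; case; constructor. Qed.

HB.instance Definition _ := hasDecEq.Build sign sign_eqP.

Definition sign_le (a b : sign) : bool := (a == b) || (b == Zero).

Definition lam_le (n : nat) (l1 l2 : 'I_n -> sign) : Prop :=
  forall i, sign_le (l1 i) (l2 i).

Definition zeros_between (n : nat) (l : 'I_n -> sign) (i j : 'I_n) : bool :=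
  [forall r : 'I_n, ((i < r)%N && (r < j)%N) ==> (l r == Zero)].

Definition even_gap (n : nat) (l : 'I_n -> sign) (i j : 'I_n) : bool :=
  [&& (i < j)%N,
      ((l i == Plus) && (l j == Minus)) || ((l i == Minus) && (l j == Plus)),
      zeros_between l i j & ~~ odd (j - i - 1)].

Definition odd_gap (n : nat) (l : 'I_n -> sign) (i j : 'I_n) : bool :=
  [&& (i < j)%N, l i != Zero, l i == l j,
      zeros_between l i j & odd (j - i - 1)].

Definition mlam (n : nat) (l : 'I_n -> sign) : nat :=
  (#|[pred p : 'I_n * 'I_n | even_gap l p.1 p.2]|
   + #|[pred p : 'I_n * 'I_n | odd_gap l p.1 p.2]|
   + #|[pred i : 'I_n | l i == Zero]|)%N.

Definition ugen (R : ringType) (n d : nat) (s : 'I_n -> R) (i : 'I_n) : 'rV[R]_d :=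
  \row_(k < d) s i ^+ k.

Definition zonotope (R : numDomainType) (n d : nat) (s : 'I_n -> R)
  (x : 'rV[R]_d) : Prop :=
  exists c : 'I_n -> R, (forall i, 0 <= c i <= 1) /\
    x = \sum_(i < n) c i *: ugen d s i.

Definition dotv (R : ringType) (d : nat) (w x : 'rV[R]_d) : R :=
  \sum_(k < d) w 0 k * x 0 k.

(* A (nonempty) face of a polytope P: the set of maximizers on P of some
   linear functional w (w = 0 gives P itself). *)
Definition is_face (R : numDomainType) (d : nat) (P F : 'rV[R]_d -> Prop) : Prop :=
  exists w : 'rV[R]_d, forall x,
    F x <-> (P x /\ forall y, P y -> dotv w y <= dotv w x).

Definition proper_face (R : numDomainType) (d : nat) (P F : 'rV[R]_d -> Prop) : Prop :=
  [/\ is_face P F, exists x, F x & ~ (forall x, P x -> F x)].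

(* Main.v *)
Require Import Defs.
From HB Require Import structures.
From mathcomp Require Import all_boot all_order all_algebra.
From mathcomp Require Import ring lra zify.
Import Order.TTheory GRing.Theory Num.Theory.
Local Open Scope ring_scope.
Set Implicit Arguments. Unset Strict Implicit.

Lemma incr_lt (R : realFieldType) (N : nat) (t : nat -> R) :
  (forall j, (j < N)%N -> t j < t j.+1) ->
  forall i j, (i < j)%N -> (j <= N)%N -> t i < t j.
Proof.
move=> ht i; elim=> [//|j IH] hij hj.
have := ht j hj.
rewrite ltnS leq_eqVlt in hij; case/orP: hij => [/eqP ->//|hij].
move=> h; apply: lt_trans h; apply: IH => //; exact: ltnW.
Qed.

Lemma sqr_pos (R : realDomainType) (x : R) : x != 0 -> 0 < x * x.
Proof. by move=> h; rewrite -expr2 exprn_even_gt0 // h orbT. Qed.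

Lemma alternation (R : realFieldType) (N : nat) (t : nat -> R) (q : {poly R}) :
 (forall j, (j < N)%N -> t j < t j.+1) ->
 (forall j, (j < N)%N -> q.[t j] * q.[t j.+1] < 0) ->
 q.[t 0] != 0 -> (N < size q)%N.
Proof.
elim: N q => [|N IH] q ht hq h0.
  rewrite size_poly_gt0; apply: contraNneq h0 => ->; by rewrite horner0.
rewrite ltnNge; apply/negP => hsz.
set T := t N.+1.
have tlt := incr_lt ht.
set g := \prod_(1 <= l < N.+1) ('X - (t l)%:P).
have hg x : g.[x] = \prod_(1 <= l < N.+1) (x - t l).
  by rewrite /g horner_prod; apply: eq_bigr => l _; rewrite hornerXsubC.
have gT : 0 < g.[T].
  rewrite hg big_seq; apply: prodr_gt0 => l; rewrite mem_index_iota => /andP[h1 h2].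
  by rewrite subr_gt0; apply: tlt.
have gj j : (1 <= j <= N)%N -> g.[t j] = 0.
  move=> /andP[h1 h2]; apply/eqP; rewrite hg prodf_seq_eq0; apply/hasP; exists j.
    by rewrite mem_index_iota h1 ltnS.
  by rewrite subrr eqxx.
have sg : size g = N.+1.
  by rewrite /g size_prod_XsubC size_iota subn1.
have q1 : q.[t 1] != 0.
  by apply/negP => /eqP e; have := hq 0%N isT; rewrite e mulr0 ltxx.
have key : forall k, (k <= N)%N ->
    0 < q.[t 1] * q.[t k.+1] * \prod_(1 <= l < k.+1) (t 0 - t l).
  elim=> [_|k IHk hk].
    by rewrite big_geq // mulr1 -expr2 exprn_even_gt0 // q1 orbT.
  rewrite big_nat_recr //=.
  have H1 := IHk (ltnW hk).
  have H2 := hq k.+1 hk.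
  have H3 : t 0 - t k.+1 < 0 by rewrite subr_lt0; apply: tlt => //; apply: leqW.
  have bn : q.[t k.+1] != 0.
    by apply/negP => /eqP e; move: H2; rewrite e mul0r ltxx.
  rewrite -(pmulr_rgt0 _ (sqr_pos bn)).
  set a := q.[t 1] in H1 *; set b := q.[t k.+1] in H1 H2 bn *.
  set c := q.[t k.+2] in H2 *.
  set P := \prod_(1 <= l < k.+1) (t 0 - t l) in H1 *.
  set e := t 0 - t k.+1 in H3 *.
  have -> : b * b * (a * c * (P * e)) = (a * b * P) * (b * c) * e by ring.
  by rewrite (nmulr_lgt0 _ H3) (pmulr_rlt0 _ H1).
have keyN := key N (leqnn N).
rewrite -hg in keyN.
have gTn : g.[T] != 0 by rewrite gt_eqF.
set α := q.[T] / g.[T].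
set h := q - α *: g.
have hh x : h.[x] = q.[x] - α * g.[x] by rewrite /h hornerD hornerN hornerZ.
have hT : h.[T] = 0 by rewrite hh /α divfK // subrr.
have hqj j : (1 <= j <= N)%N -> h.[t j] = q.[t j].
  by move=> hj; rewrite hh gj // mulr0 subr0.
have h0q : h.[t 0] * q.[t 1] < 0.
  have A := hq 0%N isT.
  have B : 0 < α * g.[t 0] * q.[t 1].
    have -> : α * g.[t 0] * q.[t 1] = (q.[t 1] * q.[T] * g.[t 0]) / g.[T] by rewrite /α; ring.
    by rewrite divr_gt0.
  rewrite hh mulrBl; lra.
have /factor_theorem [r hr] : root h T by rewrite /root hT.
have hrx x : h.[x] = r.[x] * (x - T) by rewrite hr hornerM hornerXsubC.
have h0n : h.[t 0] != 0 by apply/negP => /eqP e; move: h0q; rewrite e mul0r ltxx.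
have r0 : r.[t 0] != 0 by apply: contraNneq h0n; rewrite hrx => ->; rewrite mul0r.
have rn0 : r != 0 by apply: contraNneq r0 => ->; rewrite horner0.
have szh : (size h <= N.+1)%N.
  rewrite /h (leq_trans (size_add _ _)) // geq_max hsz /= size_opp.
  by rewrite (leq_trans (size_scale_leq _ _)) // sg.
have szr : (size r <= N)%N.
  move: szh; rewrite hr size_mul // ?size_XsubC ?polyXsubC_eq0 //.
  by rewrite addn2 /=.
suff : (N < size r)%N by rewrite ltnNge szr.
apply: IH r0.
  by move=> j hj; apply: ht; apply: ltnW.
move=> j hj.
have hhj : h.[t j] * h.[t j.+1] < 0.
  case: j hj => [|j] hj.
    by rewrite (hqj 1%N) //= hj.
  rewrite (hqj j.+1) ?(hqj j.+2) /= ?hj ?(ltnW hj) //.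
  by apply: hq; apply: leqW.
rewrite !hrx in hhj.
have pos : 0 < (t j - T) * (t j.+1 - T).
  by rewrite nmulr_rgt0 ?subr_lt0; apply: tlt; lia.
have e : r.[t j] * (t j - T) * (r.[t j.+1] * (t j.+1 - T)) =
   (r.[t j] * r.[t j.+1]) * ((t j - T) * (t j.+1 - T)) by ring.
rewrite e in hhj.
by rewrite (pmulr_llt0 _ pos) in hhj.
Qed.

Lemma incr_ltn (N : nat) (t : nat -> nat) :
  (forall j, (j < N)%N -> t j < t j.+1)%N ->
  forall i j, (i < j)%N -> (j <= N)%N -> (t i < t j)%N.
Proof.
move=> ht i; elim=> [//|j IH] hij hj.
have := ht j hj.
rewrite ltnS leq_eqVlt in hij; case/orP: hij => [/eqP ->//|hij].
move=> h; apply: ltn_trans h; apply: IH => //; exact: ltnW.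
Qed.

Lemma extract (R : realFieldType) (N : nat) (v : nat -> R) :
  (forall j, (j <= N)%N -> v j != 0) ->
  exists phi : nat -> nat,
    let C := count (fun j => v j * v j.+1 < 0) (iota 0 N) in
    [/\ phi C = N, (forall k, (k < C)%N -> (phi k < phi k.+1)%N) &
        (forall k, (k < C)%N -> v (phi k) * v (phi k.+1) < 0)].
Proof.
elim: N => [|N IH] hv.
  by exists (fun _ => 0%N).
have [phi [h1 h2 h3]] := IH (fun j hj => hv j (leqW hj)).
rewrite (_ : iota 0 N.+1 = iota 0 N ++ [:: N]); last by rewrite -addn1 iotaD.
rewrite count_cat /= addn0.
set C := count _ _ in h1 h2 h3 *.
have vN := hv N (leqnSn N).
have vN1 := hv N.+1 (leqnn _).
case hc: (v N * v N.+1 < 0).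
  exists (fun k => if k == C.+1 then N.+1 else phi k); split.
  - by rewrite /= addn1 eqxx.
  - move=> k; rewrite addn1 ltnS => hk.
    rewrite eqSS; case: (ltnP k C) => hk'.
      rewrite (ltn_eqF hk') (ltn_eqF (leq_trans hk' (leqnSn _))); exact: h2.
    have -> : k = C by apply/eqP; rewrite eqn_leq hk hk'.
    by rewrite eqxx (ltn_eqF (ltnSn _)) h1.
  - move=> k; rewrite addn1 ltnS => hk.
    rewrite eqSS; case: (ltnP k C) => hk'.
      rewrite (ltn_eqF hk') (ltn_eqF (leq_trans hk' (leqnSn _))); exact: h3.
    have -> : k = C by apply/eqP; rewrite eqn_leq hk hk'.
    by rewrite eqxx (ltn_eqF (ltnSn _)) h1.
exists (fun k => if k == C then N.+1 else phi k); rewrite addn0; split.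
- by rewrite eqxx.
- move=> k hk; rewrite (ltn_eqF hk); case: eqP => e.
    by rewrite -e in h1; rewrite -h1 ltnS ltnW // h2 // e.
  exact: h2.
- move=> k hk; rewrite (ltn_eqF hk); case: eqP => e; last exact: h3.
  have a := h3 k hk; rewrite e h1 in a.
  have b : 0 < v N * v N.+1.
    by rewrite lt_def mulf_neq0 //= leNgt hc.
  rewrite -(pmulr_rlt0 _ (sqr_pos vN)).
  have -> : v N * v N * (v (phi k) * v N.+1) = (v (phi k) * v N) * (v N * v N.+1) by ring.
  by rewrite (pmulr_llt0 _ b).
Qed.

Lemma changes_bound (R : realFieldType) (N : nat) (t : nat -> R) (q : {poly R}) :
  (forall j, (j < N)%N -> t j < t j.+1) ->
  (forall j, (j <= N)%N -> q.[t j] != 0) ->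
  (count (fun j => (q.[t j] * q.[t j.+1] < 0)%R) (iota 0 N) < size q)%N.
Proof.
move=> ht hq.
have [phi []] := extract hq.
set C := count _ _ => h1 h2 h3.
have tl := incr_lt ht.
have pl := incr_ltn h2.
have phile k : (k <= C)%N -> (phi k <= N)%N.
  rewrite leq_eqVlt => /orP [/eqP -> | hk]; first by rewrite h1.
  by rewrite -h1 ltnW // pl.
apply: (@alternation _ C (fun k => t (phi k))).
- move=> j hj; apply: tl; [exact: h2 | exact: phile].
- exact: h3.
- by apply: hq; apply: phile.
Qed.

Lemma prod_sign (R : realDomainType) (I : Type) (r : seq I) (F : I -> R) :
  all (fun i => F i != 0) r ->
  0 < (-1) ^+ (count (fun i => F i < 0) r) * \prod_(i <- r) F i.
Proof.
elim: r => [|x r IH] /=; first by rewrite big_nil mulr1 ltr01.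
case/andP => hx hr; rewrite big_cons exprD.
set b := nat_of_bool _; set c := count _ _; set P := \prod_(j <- r) F j.
have -> : (-1) ^+ b * (-1) ^+ c * (F x * P) = ((-1) ^+ b * F x) * ((-1) ^+ c * P) by ring.
apply: mulr_gt0 (IH hr).
rewrite /b; case: (ltP (F x) 0) => h /=.
  by rewrite mulN1r oppr_gt0.
by rewrite mul1r lt_def hx.
Qed.

Lemma card_nat_pred (n : nat) (P : pred nat) :
  #|[pred z : 'I_n | P z]| = count P (iota 0 n).
Proof. by rewrite cardE size_filter -enumT -val_enum_ord count_map. Qed.

Lemma count_between (a b m : nat) :
  count (fun z => (a < z < b)%N) (iota 0 m) = (minn m b - a.+1)%N.
Proof.
elim: m => [|m IH]; first by rewrite /= min0n.
rewrite (_ : iota 0 m.+1 = iota 0 m ++ [:: m]); last by rewrite -addn1 iotaD.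
rewrite count_cat IH /= addn0.
case: (ltnP a m) => h1; case: (ltnP m b) => h2 /=; lia.
Qed.

Lemma prod_sign_fin (R : realDomainType) (T : finType) (P : pred T) (F : T -> R) :
  (forall z, P z -> F z != 0) ->
  0 < (-1) ^+ #|[pred z | P z && (F z < 0)]| * \prod_(z | P z) F z.
Proof.
move=> hF; rewrite -big_filter.
have -> : #|[pred z | P z && (F z < 0)]| = count (fun z => F z < 0) [seq z <- index_enum T | P z].
  rewrite cardE -deprecated_filter_index_enum size_filter count_filter.
  by apply: eq_count => z; rewrite /= andbC.
apply: (@prod_sign R T); apply/allP => z; rewrite mem_filter => /andP[hz _]; exact: hF.
Qed.

Definition sval (R : ringType) (a : sign) : R :=
  match a with Plus => 1 | Minus => -1 | Zero => 0 end.

Section Core.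
Variable R : realFieldType.
Variable n : nat.
Variable s : 'I_n -> R.
Hypothesis hs : forall i j : 'I_n, (i < j)%N -> s i < s j.
Variable lam : 'I_n -> sign.
Variable i0 : 'I_n.

Definition Pi (i : 'I_n) : R := \prod_(z : 'I_n | lam z == Zero) (s i - s z).
Definition rho (i : 'I_n) : R := sval R (lam i) * Pi i.
Definition nz : seq 'I_n := [seq i <- enum 'I_n | lam i != Zero].
Definition nt (k : nat) : 'I_n := nth i0 nz k.
Definition chgl : seq nat := [seq k <- iota 0 (size nz).-1 | rho (nt k) * rho (nt k.+1) < 0].

Lemma s_lt (i j : 'I_n) : (s i < s j) = (i < j)%N.
Proof.
case: (ltngtP i j) => h; first by rewrite hs.
  by apply/negbTE; rewrite -leNgt ltW // hs.
by rewrite (val_inj h) ltxx.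
Qed.

Lemma s_inj : injective s.
Proof.
move=> i j e; apply: val_inj; case: (ltngtP i j) => // h.
  by have := hs h; rewrite e ltxx.
by have := hs h; rewrite e ltxx.
Qed.

Lemma mem_nz i : (i \in nz) = (lam i != Zero).
Proof. by rewrite mem_filter mem_enum andbT. Qed.

Lemma nz_sorted : sorted (fun i j : 'I_n => (i < j)%N) nz.
Proof.
apply: sorted_filter; first by move=> a b c; apply: ltn_trans.
have := iota_ltn_sorted 0 n; rewrite -val_enum_ord.
by rewrite sorted_map.
Qed.

Lemma nz_uniq : uniq nz.
Proof. by rewrite filter_uniq // enum_uniq. Qed.

Lemma nt_lt k k' : (k < k')%N -> (k' < size nz)%N -> (nt k < nt k')%N.
Proof.
move=> h1 h2; apply: (sorted_ltn_nth _ _ nz_sorted) => //.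
  by move=> a b c; apply: ltn_trans.
by rewrite inE (ltn_trans h1 h2).
Qed.

Lemma nt_ltE k k' : (k < size nz)%N -> (k' < size nz)%N -> (nt k < nt k')%N = (k < k')%N.
Proof.
move=> h1 h2; case: (ltngtP k k') => h; first by rewrite nt_lt.
  by apply/negbTE; rewrite -leqNgt ltnW // nt_lt.
by rewrite h ltnn.
Qed.

Lemma nt_mem k : (k < size nz)%N -> lam (nt k) != Zero.
Proof. by move=> h; rewrite -mem_nz mem_nth. Qed.

Lemma nt_index i : lam i != Zero -> nt (index i nz) = i /\ (index i nz < size nz)%N.
Proof. by rewrite -mem_nz => h; rewrite /nt nth_index // index_mem. Qed.

Lemma zb_consec k : (k.+1 < size nz)%N -> zeros_between lam (nt k) (nt k.+1).
Proof.
move=> hk; apply/forallP => r; apply/implyP => /andP[h1 h2].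
apply/negPn/negP => hr.
have [e hr'] := nt_index hr.
rewrite -e in h1 h2.
have hk' : (k < size nz)%N by apply: ltn_trans hk.
rewrite nt_ltE // in h1.
rewrite nt_ltE // in h2.
lia.
Qed.

Lemma consec_gap (i j : 'I_n) : (i < j)%N -> lam i != Zero -> lam j != Zero ->
  zeros_between lam i j ->
  ((index i nz).+1 < size nz)%N /\ nt (index i nz).+1 = j.
Proof.
move=> hij hi hj zb.
have [ei hi'] := nt_index hi; have [ej hj'] := nt_index hj.
set k := index i nz in ei hi' *; set k' := index j nz in ej hj'.
have kk : (k < k')%N by rewrite -nt_ltE // ei ej.
have k1 : (k.+1 < size nz)%N by apply: leq_ltn_trans hj'.
split => //.
case: (ltngtP k.+1 k') => h; last by rewrite h.
- have a1 : (i < nt k.+1)%N by rewrite -ei nt_ltE.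
  have a2 : (nt k.+1 < j)%N by rewrite -ej nt_ltE.
  have := forallP zb (nt k.+1); rewrite a1 a2 /= => /eqP h0.
  by have := nt_mem k1; rewrite h0.
- lia.
Qed.

Lemma gap_basic (i j : 'I_n) : even_gap lam i j || odd_gap lam i j ->
  [/\ (i < j)%N, lam i != Zero, lam j != Zero & zeros_between lam i j].
Proof.
rewrite /even_gap /odd_gap; case/orP.
  case/and4P => h1 h2 h3 _; split => //; case/orP: h2 => /andP[/eqP e1 /eqP e2]; by rewrite ?e1 ?e2.
case/and5P => h1 h2 /eqP h3 h4 _; split => //; by rewrite -h3.
Qed.

Lemma GC (i j : 'I_n) : (i < j)%N -> lam i != Zero -> lam j != Zero ->
  zeros_between lam i j ->
  (even_gap lam i j || odd_gap lam i j) = (rho i * rho j < 0).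
Proof.
move=> hij hi hj zb.
have hX : 0 < (-1) ^+ (j - i - 1) * (Pi i * Pi j).
  rewrite /Pi -big_split /=.
  have := @prod_sign_fin R _ (fun z => lam z == Zero) (fun z => (s i - s z) * (s j - s z)).
  have -> : #|[pred z | (lam z == Zero) && ((s i - s z) * (s j - s z) < 0)]| = (j - i - 1)%N.
    rewrite (@eq_card _ _ [pred z : 'I_n | (i < z < j)%N]).
      rewrite (card_nat_pred n (fun z => (i < z < j)%N)) count_between.
      have := ltn_ord j; lia.
    move=> z; rewrite !inE.
    case hz: (i < z < j)%N.
      have := forallP zb z; rewrite hz /= => ->; rewrite /=.
      case/andP: hz => a b.
      have a' : s i < s z by rewrite s_lt.
      have b' : s z < s j by rewrite s_lt.
      by rewrite nmulr_rlt0 ?subr_lt0 // subr_gt0.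
    apply/negbTE; rewrite negb_and; apply/orP; right; rewrite -leNgt.
    have hij' : s i < s j by rewrite s_lt.
    move/negbT: hz; rewrite negb_and -!leqNgt => /orP [h | h].
      have : s z <= s i.
        by case: (ltngtP z i) h => // [hh _ | hh _]; [ rewrite ltW // s_lt | rewrite (val_inj hh) ].
      move=> hh; nra.
    have : s j <= s z.
      by case: (ltngtP j z) h => // [hh _ | hh _]; [ rewrite ltW // s_lt | rewrite (val_inj hh) ].
    move=> hh; nra.
  apply => z /eqP hz; rewrite mulf_neq0 // subr_eq0; apply/eqP => /s_inj e.
    by move: hi; rewrite e hz.
  by move: hj; rewrite e hz.
rewrite /rho.
set X := Pi i * Pi j in hX.
have -> : sval R (lam i) * Pi i * (sval R (lam j) * Pi j) = sval R (lam i) * sval R (lam j) * X.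
  by rewrite /X; ring.
rewrite /even_gap /odd_gap hij zb /=.
rewrite -signr_odd in hX.
case: (lam i) hi; case: (lam j) hj => // _ _; case: (odd _) hX => /= hX.
all: first [ (symmetry; lra) | (symmetry; apply/negbTE; rewrite -leNgt; lra) ].
Qed.

Lemma mlamE : mlam lam = (#|[pred i | lam i == Zero]| + size chgl)%N.
Proof.
rewrite /mlam addnC; congr (_ + _)%N.
set A := [pred p : 'I_n * 'I_n | even_gap lam p.1 p.2].
set B := [pred p : 'I_n * 'I_n | odd_gap lam p.1 p.2].
rewrite -cardUI.
have -> : #|[predI A & B]| = 0%N.
  apply: eq_card0 => [[i j]]; rewrite !inE /A /B /= /even_gap /odd_gap.
  apply/negbTE; rewrite negb_and; apply/orP.
  case: (lam i); case: (lam j); rewrite /= ?andbF ?andbT ?orbF; by auto.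
rewrite addn0.
set pairs := [seq (nt k, nt k.+1) | k <- chgl].
have up : uniq pairs.
  rewrite map_inj_in_uniq; first by rewrite filter_uniq // iota_uniq.
  move=> k k'; rewrite !mem_filter !mem_iota /= => /andP[_ hk] /andP[_ hk'] [e _].
  apply/eqP; rewrite -(@nth_uniq _ i0 nz) //; first by apply/eqP.
  - move: hk; case: (size nz) => //= m; lia.
  - move: hk'; case: (size nz) => //= m; lia.
  - exact: nz_uniq.
have mp : [predU A & B] =i pairs.
  move=> [i j]; rewrite !inE /A /B /=; apply/idP/idP.
    move=> hg; have [hij hi hj zb] := gap_basic hg.
    have [k1 ek] := consec_gap hij hi hj zb.
    have [ei _] := nt_index hi.
    apply/mapP; exists (index i nz); last by rewrite ei ek.
    rewrite mem_filter mem_iota /= ei ek -GC // hg /=.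
    move: k1; case: (size nz) => //= m; lia.
  case/mapP => k; rewrite mem_filter mem_iota /= => /andP[hc hk] [-> ->].
  have k1 : (k.+1 < size nz)%N by move: hk; case: (size nz) => //= m; lia.
  rewrite GC //.
  - by apply: nt_lt.
  - by apply: nt_mem; apply: ltn_trans k1.
  - by apply: nt_mem.
  - by apply: zb_consec.
by rewrite (eq_card mp) (card_uniqP up) size_map.
Qed.

End Core.

Definition sgnR (R : numDomainType) (x : R) : sign :=
  if 0 < x then Plus else if x < 0 then Minus else Zero.

Lemma sgnR_zero (R : realDomainType) (x : R) : (sgnR x == Zero) = (x == 0).
Proof.
by rewrite /sgnR; case: (ltgtP x 0).
Qed.

Lemma sgnR_pos (R : realDomainType) (x : R) : x != 0 -> 0 < sval R (sgnR x) * x.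
Proof.
rewrite /sgnR; case: (ltgtP x 0) => h //= _.
  by rewrite mulN1r oppr_gt0.
by rewrite mul1r.
Qed.

Lemma sgnR_of (R : realDomainType) (a : sign) (x : R) : a != Zero -> 0 < sval R a * x -> sgnR x = a.
Proof.
rewrite /sgnR; case: a => //= _ h.
  by rewrite mul1r in h; rewrite h.
by rewrite mulN1r oppr_gt0 in h; rewrite h (lt_gtF h).
Qed.

Lemma signs_eq (R : realDomainType) (a x b y : R) :
  0 < a * x -> 0 < b * y -> (x * y < 0) = (a * b < 0).
Proof.
move=> h1 h2.
have h : 0 < (a * b) * (x * y).
  have -> : (a * b) * (x * y) = (a * x) * (b * y) by ring.
  exact: mulr_gt0.
case: (ltP (x * y) 0) => hxy.
  by rewrite (nmulr_lgt0 _ hxy) in h.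
have hxy' : 0 < x * y.
  rewrite lt_def hxy andbT; apply/negP => /eqP e; move: h; rewrite e mulr0 ltxx //.
by rewrite (pmulr_lgt0 _ hxy') in h; rewrite ltNge ltW.
Qed.

Lemma card_empty (T : finType) (A : {pred T}) : #|T| = 0%N -> #|A| = 0%N.
Proof. by move=> h; apply/eqP; rewrite -leqn0 -h max_card. Qed.

Lemma H1 (R : realFieldType) (n : nat) (s : 'I_n -> R)
  (hs : forall i j : 'I_n, (i < j)%N -> s i < s j) (p : {poly R}) :
  p != 0 -> (mlam (fun i => sgnR p.[s i]) < size p)%N.
Proof.
move=> p0.
case: n s hs => [|n'] s hs.
  have c0 : forall A : {pred 'I_0 * 'I_0}, #|A| = 0%N.
    by move=> A; apply: card_empty; rewrite card_prod card_ord.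
  have c1 : forall A : {pred 'I_0}, #|A| = 0%N.
    by move=> A; apply: card_empty; rewrite card_ord.
  by rewrite /mlam !c0 c1 size_poly_gt0.
set lam := fun i => sgnR p.[s i].
pose i0 : 'I_n'.+1 := ord0.
rewrite (mlamE hs lam i0).
set rs := map s [seq z <- index_enum 'I_n'.+1 | lam z == Zero].
have hroot : all (root p) rs.
  apply/allP => x /mapP [z]; rewrite mem_filter => /andP[hz _] ->.
  by rewrite /root -sgnR_zero.
have huniq : uniq_roots rs.
  rewrite uniq_rootsE map_inj_uniq; first by rewrite filter_uniq // index_enum_uniq.
  exact: s_inj hs.
have [q hq] := uniq_roots_prod_XsubC hroot huniq.
set P0 := \prod_(z <- rs) ('X - z%:P) in hq.
have q0 : q != 0 by apply: contraNneq p0 => e; rewrite hq e mul0r.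
have P00 : P0 != 0 by rewrite monic_neq0 // monic_prod_XsubC.
have hP0 x : P0.[x] = \prod_(z : 'I_n'.+1 | lam z == Zero) (x - s z).
  by rewrite /P0 horner_prod big_map big_filter; apply: eq_bigr => z _; rewrite hornerXsubC.
have szrs : size rs = #|[pred i | lam i == Zero]|.
  by rewrite size_map cardE -deprecated_filter_index_enum.
rewrite hq size_mul // size_prod_XsubC szrs addnS /= [(size q + _)%N]addnC ltn_add2l.
have rq i : lam i != Zero -> 0 < rho s lam i * q.[s i].
  move=> hi.
  have hpi : p.[s i] = q.[s i] * Pi s lam i by rewrite hq hornerM hP0.
  have hp : p.[s i] != 0 by rewrite -sgnR_zero.
  have := sgnR_pos hp; rewrite -/(lam i) /rho.
  suff -> : sval R (lam i) * Pi s lam i * q.[s i] = sval R (lam i) * p.[s i] by [].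
  by rewrite hpi; ring.
rewrite /chgl size_filter.
case hL: (size (nz lam)) => [|L] /=.
  by rewrite size_poly_gt0.
set t := fun k => s (nt lam i0 k).
have := @changes_bound R L t q.
rewrite (@eq_in_count _ _ (fun j => rho s lam (nt lam i0 j) * rho s lam (nt lam i0 j.+1) < 0)).
  apply.
  - move=> j hj; rewrite /t (s_lt hs); apply: nt_lt; lia.
  - move=> j hj; have := rq (nt lam i0 j) (nt_mem _ _); rewrite hL => /(_ (leq_ltn_trans hj (leqnn _))).
    by apply: contraTneq => ->; rewrite mulr0 ltxx.
move=> j; rewrite mem_iota => /andP[_ hj].
apply: signs_eq; apply: rq; apply: nt_mem; lia.
Qed.

Lemma rho_neq0 (R : realFieldType) (n : nat) (s : 'I_n -> R)
  (hs : forall i j : 'I_n, (i < j)%N -> s i < s j) (lam : 'I_n -> sign) (i : 'I_n) :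
  lam i != Zero -> rho s lam i != 0.
Proof.
move=> hi; rewrite /rho mulf_neq0 //.
  by case: (lam i) hi => //= _; rewrite ?oppr_eq0 oner_eq0.
rewrite /Pi prodf_seq_neq0; apply/allP => z _; apply/implyP => /eqP hz.
rewrite subr_eq0; apply/eqP => /(s_inj hs) e; by move: hi; rewrite e hz.
Qed.

Lemma mid_lt (R : realFieldType) (a b : R) : a < b -> a < (a + b) / 2 /\ (a + b) / 2 < b.
Proof. move=> h; split; lra. Qed.

Lemma H2 (R : realFieldType) (n : nat) (s : 'I_n -> R)
  (hs : forall i j : 'I_n, (i < j)%N -> s i < s j) (lam : 'I_n -> sign) (d : nat) :
  (mlam lam < d)%N -> exists p : {poly R}, (size p <= d)%N /\ forall i, sgnR p.[s i] = lam i.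
Proof.
case: n s hs lam => [|n'] s hs lam hm.
  exists 1; split; last by case.
  by rewrite size_poly1; apply: leq_ltn_trans hm.
pose i0 : 'I_n'.+1 := ord0.
rewrite (mlamE hs lam i0) in hm.
set L := size (nz lam).
set t := fun k => s (nt lam i0 k).
set mu := fun k => (t k + t k.+1) / 2.
set C := chgl s lam i0 in hm.
set qc := \prod_(k <- C) ('X - (mu k)%:P).
set rs := map s [seq z <- index_enum 'I_n'.+1 | lam z == Zero].
set P0 := \prod_(z <- rs) ('X - z%:P).
have hP0 x : P0.[x] = \prod_(z : 'I_n'.+1 | lam z == Zero) (x - s z).
  by rewrite /P0 horner_prod big_map big_filter; apply: eq_bigr => z _; rewrite hornerXsubC.
have hqc x : qc.[x] = \prod_(k <- C) (x - mu k).
  by rewrite /qc horner_prod; apply: eq_bigr => k _; rewrite hornerXsubC.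
have szrs : size rs = #|[pred i | lam i == Zero]|.
  by rewrite size_map cardE -deprecated_filter_index_enum.
pose cnt j := count (fun k => (j <= k)%N) C.
pose a j := rho s lam (nt lam i0 j) * (-1) ^+ cnt j.
pose c := if (0 < L)%N then a 0%N else 1.
have memC k : (k \in C) = (k.+1 < L)%N && (rho s lam (nt lam i0 k) * rho s lam (nt lam i0 k.+1) < 0).
  rewrite /C /chgl mem_filter mem_iota andbC /= -/L; congr (_ && _); lia.
have tlt j k : (j < k)%N -> (k < L)%N -> t j < t k.
  by move=> h1 h2; rewrite /t (s_lt hs) nt_lt.
have tle j k : (j <= k)%N -> (k < L)%N -> t j <= t k.
  rewrite leq_eqVlt => /orP [/eqP -> //| h] h2; exact: ltW (tlt _ _ h h2).
have rn j : (j < L)%N -> rho s lam (nt lam i0 j) != 0.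
  by move=> h; apply: rho_neq0 => //; apply: nt_mem.
have an j : (j < L)%N -> a j != 0.
  by move=> h; rewrite mulf_neq0 ?rn // signr_eq0.
have Q j : (j < L)%N -> 0 < (-1) ^+ (cnt j) * qc.[t j].
  move=> hj.
  have e : forall k, k \in C -> (t j - mu k < 0) = (j <= k)%N.
    move=> k; rewrite memC => /andP[hk _].
    have h1 : t k < t k.+1 by apply: tlt.
    have [m1 m2] := mid_lt h1.
    rewrite subr_lt0; case: (leqP j k) => h.
      by have := tle j k h (ltn_trans (ltnSn k) hk) => h2; rewrite /mu (le_lt_trans h2 m1).
    have := tle k.+1 j h hj => h2; apply/negbTE; rewrite -leNgt; exact: ltW (lt_le_trans m2 h2).
  rewrite hqc /cnt -(eq_in_count e).
  apply: prod_sign; apply/allP => k hk; rewrite subr_eq0.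
  move: hk; rewrite memC => /andP[hk _].
  have h1 : t k < t k.+1 by apply: tlt.
  have [m1 m2] := mid_lt h1.
  case: (leqP j k) => h.
    have := tle j k h (ltn_trans (ltnSn k) hk) => h2.
    by rewrite lt_eqF // (le_lt_trans h2 m1).
  have := tle k.+1 j h hj => h2; by rewrite gt_eqF // (lt_le_trans m2 h2).
have step j : (j.+1 < L)%N -> 0 < a j * a j.+1.
  move=> hj.
  have uC : uniq C by rewrite /C /chgl filter_uniq // iota_uniq.
  have ec : cnt j = (cnt j.+1 + (j \in C))%N.
    rewrite /cnt -(count_uniq_mem _ uC) -count_predUI.
    rewrite (@eq_count _ (predI _ _) pred0) ?count_pred0 ?addn0.
      by apply: eq_count => k /=; rewrite leq_eqVlt orbC eq_sym.
    move=> k /=; apply/negbTE/negP => /andP[h1 /eqP h2]; lia.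
  rewrite /a ec memC hj /=.
  set r1 := rho s lam _; set r2 := rho s lam _; set m := cnt j.+1.
  set b : nat := nat_of_bool (r1 * r2 < 0)%R.
  have -> : r1 * (-1) ^+ (m + b) * (r2 * (-1) ^+ m)
     = r1 * r2 * (-1) ^+ b * ((-1) ^+ m) ^+ 2 by rewrite exprD; ring.
  rewrite sqrr_sign mulr1.
  rewrite /b; case: (ltP (r1 * r2) 0) => h /=.
    by rewrite mulrN1 oppr_gt0.
  rewrite mulr1 lt_def h andbT mulf_neq0 // ?rn //; lia.
have A j : (j < L)%N -> 0 < a 0%N * a j.
  elim: j => [h|j IH h]; first by apply: sqr_pos; apply: an; lia.
  have h1 := IH (ltn_trans (ltnSn j) h).
  have h2 := step j h.
  have hj : a j != 0 by apply: an; lia.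
  rewrite -(pmulr_rgt0 _ (sqr_pos hj)).
  have -> : a j * a j * (a 0%N * a j.+1) = (a 0%N * a j) * (a j * a j.+1) by ring.
  exact: mulr_gt0.
have c0 : c != 0.
  rewrite /c; case: ifP => h; last by rewrite oner_eq0.
  exact: an.
exists (c *: (P0 * qc)); split.
  rewrite size_scale // size_mul ?monic_neq0 ?monic_prod_XsubC //.
  by rewrite !size_prod_XsubC szrs /= addnS /=; rewrite size_filter in hm *; lia.
move=> i.
case hi: (lam i == Zero).
  have -> : (c *: (P0 * qc)).[s i] = 0.
    have z0 : \prod_(z | lam z == Zero) (s i - s z) = 0.
      by apply/eqP; rewrite prodf_seq_eq0; apply/hasP; exists i; rewrite ?mem_index_enum // hi subrr eqxx.
    by rewrite hornerZ hornerM hP0 z0 mul0r mulr0.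
  by rewrite /sgnR ltxx (eqP hi).
move/negbT: hi => hi.
apply: sgnR_of => //.
have [ej hj] := nt_index i0 hi.
set j := index i (nz lam) in ej hj.
have L0 : (0 < L)%N by apply: leq_ltn_trans hj.
have -> : sval R (lam i) * (c *: (P0 * qc)).[s i] = (a 0%N * a j) * ((-1) ^+ cnt j * qc.[t j]).
  rewrite /c L0 hornerZ hornerM hP0 /a /t ej.
  set e := (-1) ^+ cnt j.
  have e2 : e * e = 1 by rewrite -expr2 sqrr_sign.
  set a0 := rho s lam (nt lam i0 0) * (-1) ^+ cnt 0%N.
  transitivity (a0 * rho s lam i * qc.[s i] * (e * e)); last by ring.
  rewrite e2 mulr1 /rho /Pi; ring.
exact: mulr_gt0 (A j hj) (Q j hj).
Qed.

Definition fset (R : realFieldType) (n d : nat) (s : 'I_n -> R) (lam : 'I_n -> sign)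
  (x : 'rV[R]_d) : Prop :=
  exists c : 'I_n -> R, [/\ forall i, 0 <= c i <= 1, forall i, lam i = Plus -> c i = 1,
     forall i, lam i = Minus -> c i = 0 & x = \sum_(i < n) c i *: ugen d s i].

Lemma dot_sum (R : realFieldType) (n d : nat) (s : 'I_n -> R) (w : 'rV[R]_d) (c : 'I_n -> R) :
  dotv w (\sum_(i < n) c i *: ugen d s i) = \sum_(i < n) c i * dotv w (ugen d s i).
Proof.
rewrite /dotv.
under eq_bigr do rewrite summxE mulr_sumr.
rewrite exchange_big /=; apply: eq_bigr => i _.
rewrite mulr_sumr; apply: eq_bigr => k _; rewrite mxE; ring.
Qed.

Lemma Rep (R : realFieldType) (n : nat) (a c : 'I_n -> R) :
  (forall i, 0 <= c i <= 1) ->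
  \sum_(i < n) (if 0 < a i then a i else 0) <= \sum_(i < n) c i * a i ->
  forall i, (0 < a i -> c i = 1) /\ (a i < 0 -> c i = 0).
Proof.
move=> hc hs.
have tl i : c i * a i <= (if 0 < a i then a i else 0).
  have := hc i; case/andP => h1 h2.
  case: ifP => h; first nra.
  move/negbT: h; rewrite -leNgt => h; nra.
have z : \sum_(i < n) ((if 0 < a i then a i else 0) - c i * a i) = 0.
  apply/eqP; rewrite eq_le; apply/andP; split.
    by rewrite sumrB subr_le0.
  by apply: sumr_ge0 => i _; rewrite subr_ge0.
have ge i : true -> 0 <= (if 0 < a i then a i else 0) - c i * a i by rewrite subr_ge0.
have z' := psumr_eq0P ge z.
move=> i; have /eqP := z' i isT; rewrite subr_eq0 => /eqP e.
split => h.
  rewrite h in e; apply: (mulIf (lt0r_neq0 h)); by rewrite mul1r -e.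
have hn : ~~ (0 < a i) by rewrite -leNgt ltW.
rewrite (negbTE hn) in e.
have : c i * a i == 0 by rewrite -e.
by rewrite mulf_eq0 (negbTE (ltr0_neq0 h)) orbF => /eqP.
Qed.

Lemma sgnR_P (R : realDomainType) (x : R) : sgnR x = Plus -> 0 < x.
Proof. by rewrite /sgnR; case: (ltgtP x 0). Qed.
Lemma sgnR_M (R : realDomainType) (x : R) : sgnR x = Minus -> x < 0.
Proof. by rewrite /sgnR; case: (ltgtP x 0). Qed.
Lemma sgnR_gt (R : realDomainType) (x : R) : 0 < x -> sgnR x = Plus.
Proof. by rewrite /sgnR => ->. Qed.
Lemma sgnR_lt (R : realDomainType) (x : R) : x < 0 -> sgnR x = Minus.
Proof. by rewrite /sgnR => h; rewrite h (lt_gtF h). Qed.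

Lemma Face (R : realFieldType) (n d : nat) (s : 'I_n -> R) (w : 'rV[R]_d) (lam : 'I_n -> sign) :
  (forall i, sgnR (dotv w (ugen d s i)) = lam i) ->
  forall x, fset s lam x <-> (zonotope s x /\ forall y, zonotope s y -> dotv w y <= dotv w x).
Proof.
move=> hl x; set a := fun i => dotv w (ugen d s i).
split.
  move=> [c [hc hP hM ->]]; split; first by exists c.
  move=> y [c' [hc' ->]]; rewrite !dot_sum; apply: ler_sum => i _.
  have := hc' i; case/andP => h1 h2.
  case: (ltgtP (a i) 0) => h.
  - have := hM i; rewrite -hl => /(_ (sgnR_lt h)) ->; rewrite mul0r; rewrite /a in h; nra.
  - have := hP i; rewrite -hl => /(_ (sgnR_gt h)) ->; rewrite mul1r; rewrite /a in h; nra.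
  - by rewrite /a in h; rewrite h !mulr0.
move=> [[c [hc ->]] hmax].
pose cs := fun i => if 0 < a i then 1 else 0 : R.
have hy : zonotope s (\sum_(i < n) cs i *: ugen d s i).
  by exists cs; split => // i; rewrite /cs; case: ifP => _; rewrite ?lexx ?ler01.
have := hmax _ hy; rewrite !dot_sum.
have -> : \sum_(i < n) cs i * dotv w (ugen d s i) = \sum_(i < n) (if 0 < a i then a i else 0).
  by apply: eq_bigr => i _; rewrite /cs /a; case: ifP; rewrite ?mul1r ?mul0r.
move/(Rep hc) => hr.
exists c; split => // i hi.
  by apply: (hr i).1; apply: sgnR_P; rewrite hl.
by apply: (hr i).2; apply: sgnR_M; rewrite hl.
Qed.

Definition chalf (R : realFieldType) (lam : sign) : R :=
  match lam with Plus => 1 | Minus => 0 | Zero => 2^-1 end.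

Lemma chalf_in (R : realFieldType) (l : sign) : 0 <= @chalf R l <= 1.
Proof. case: l => /=; rewrite ?lexx ?ler01 //; apply/andP; split; lra. Qed.

Lemma fset_half (R : realFieldType) (n d : nat) (s : 'I_n -> R) (lam : 'I_n -> sign) :
  fset s lam (\sum_(i < n) @chalf R (lam i) *: ugen d s i).
Proof.
exists (fun i => @chalf R (lam i)); split => // i; first exact: chalf_in.
  by move=> ->.
by move=> ->.
Qed.

Lemma lam_le_sub (R : realFieldType) (n d : nat) (s : 'I_n -> R) (l1 l2 : 'I_n -> sign) :
  lam_le l1 l2 -> forall x : 'rV[R]_d, fset s l1 x -> fset s l2 x.
Proof.
move=> hle x [c [hc hP hM ->]]; exists c; split => // i hi.
  by apply: hP; have := hle i; rewrite /sign_le hi; case: (l1 i).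
by apply: hM; have := hle i; rewrite /sign_le hi; case: (l1 i).
Qed.

Lemma sub_lam_le (R : realFieldType) (n d : nat) (s : 'I_n -> R) (l1 l2 : 'I_n -> sign)
  (w : 'rV[R]_d) :
  (forall i, sgnR (dotv w (ugen d s i)) = l2 i) ->
  (forall x : 'rV[R]_d, fset s l1 x -> fset s l2 x) -> lam_le l1 l2.
Proof.
move=> hl hsub i.
have hx := hsub _ (fset_half d s l1).
have [_ hmax] := (Face hl _).1 hx.
set a := fun i => dotv w (ugen d s i).
pose cs := fun i => if 0 < a i then 1 else 0 : R.
have hy : zonotope s (\sum_(i < n) cs i *: ugen d s i).
  by exists cs; split => // j; rewrite /cs; case: ifP => _; rewrite ?lexx ?ler01.
have := hmax _ hy; rewrite !dot_sum.
have -> : \sum_(i < n) cs i * dotv w (ugen d s i) = \sum_(i < n) (if 0 < a i then a i else 0).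
  by apply: eq_bigr => j _; rewrite /cs /a; case: ifP; rewrite ?mul1r ?mul0r.
move/(Rep (fun j => chalf_in R (l1 j))) => hr.
rewrite /sign_le -(hl i).
case: (ltgtP (a i) 0) => h.
- have := (hr i).2 h; rewrite /a in h; rewrite (sgnR_lt h).
  by case: (l1 i) => //= e; exfalso; lra.
- have := (hr i).1 h; rewrite /a in h; rewrite (sgnR_gt h).
  by case: (l1 i) => //= e; exfalso; lra.
- by rewrite /a in h; rewrite h /sgnR ltxx orbT.
Qed.

Lemma dot_row (R : realFieldType) (n d : nat) (s : 'I_n -> R) (p : {poly R}) (i : 'I_n) :
  (size p <= d)%N -> dotv (\row_(k < d) p`_k) (ugen d s i) = p.[s i].
Proof.
move=> h; rewrite (horner_coef_wide _ h) /dotv; apply: eq_bigr => k _; by rewrite !mxE.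
Qed.

Definition wpoly (R : realFieldType) (d : nat) (w : 'rV[R]_d) : {poly R} :=
  Poly [seq w 0 j | j <- enum 'I_d].

Lemma wpoly_size (R : realFieldType) (d : nat) (w : 'rV[R]_d) : (size (wpoly w) <= d)%N.
Proof. by rewrite /wpoly (leq_trans (size_Poly _)) // size_map size_enum_ord. Qed.

Lemma dot_poly (R : realFieldType) (n d : nat) (s : 'I_n -> R) (w : 'rV[R]_d) (i : 'I_n) :
  dotv w (ugen d s i) = (wpoly w).[s i].
Proof.
rewrite (horner_coef_wide _ (wpoly_size w)) /dotv; apply: eq_bigr => k _.
rewrite mxE coef_Poly (nth_map k) ?size_enum_ord // nth_ord_enum.
by congr (_ * _); rewrite mxE.
Qed.

Lemma half_neq0 (R : realFieldType) : (2^-1 : R) != 0.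
Proof. apply/eqP; lra. Qed.
Lemma half_neq1 (R : realFieldType) : (2^-1 : R) != 1.
Proof. apply/eqP; lra. Qed.
Lemma half_in (R : realFieldType) : 0 <= (2^-1 : R) <= 1.
Proof. apply/andP; split; lra. Qed.

Unset Implicit Arguments.

Theorem proposition3p2 (R : realFieldType) (n d : nat) (s : 'I_n -> R)
  (hs : forall i j : 'I_n, (i < j)%N -> s i < s j)
  (hdn : (d <= n)%N) :
  exists f : ('I_n -> sign) -> ('rV[R]_d -> Prop),
    [/\ (forall l, (mlam l < d)%N -> proper_face (zonotope s) (f l)),
        (forall F, proper_face (zonotope s) F ->
           exists l, (mlam l < d)%N /\ (forall x, f l x <-> F x)) &
        (forall l1 l2, (mlam l1 < d)%N -> (mlam l2 < d)%N ->
           ((forall x, f l1 x -> f l2 x) <-> lam_le l1 l2))].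
Proof.
have real l : (mlam l < d)%N -> exists w : 'rV[R]_d, forall i, sgnR (dotv w (ugen d s i)) = l i.
  move=> hm; have [p [hp hsg]] := H2 hs hm.
  by exists (\row_(k < d) p`_k) => i; rewrite dot_row.
exists (fun l => fset s l); split.
- move=> l hm; have [w hw] := real l hm.
  split.
  + by exists w; apply: Face.
  + by exists (\sum_(i < n) @chalf R (l i) *: ugen d s i); apply: fset_half.
  + move=> hall.
    have hx : zonotope s (\sum_(i < n) 2^-1 *: ugen d s i).
      by exists (fun _ => 2^-1); split => // i; apply: half_in.
    have [_ hmax] := (Face hw _).1 (hall _ hx).
    set a := fun i => dotv w (ugen d s i).
    pose cs := fun i => if 0 < a i then 1 else 0 : R.
    have hy : zonotope s (\sum_(i < n) cs i *: ugen d s i).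
      by exists cs; split => // j; rewrite /cs; case: ifP => _; rewrite ?lexx ?ler01.
    have := hmax _ hy; rewrite !dot_sum.
    have -> : \sum_(i < n) cs i * dotv w (ugen d s i) = \sum_(i < n) (if 0 < a i then a i else 0).
      by apply: eq_bigr => j _; rewrite /cs /a; case: ifP; rewrite ?mul1r ?mul0r.
    have hc : forall i : 'I_n, 0 <= (2^-1 : R) <= 1 by move=> i; apply: half_in.
    move/(Rep hc) => hr.
    have z : forall i, l i = Zero.
      move=> i; rewrite -hw; case: (ltgtP (a i) 0) => h.
      * by have := (hr i).2 h => e; exfalso; move: e; apply/eqP; apply: half_neq0.
      * by have := (hr i).1 h => e; exfalso; move: e; apply/eqP; apply: half_neq1.
      * by rewrite /a in h; rewrite h /sgnR ltxx.
    have : (n <= mlam l)%N.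
      rewrite /mlam.
      have -> : #|[pred i | l i == Zero]| = n.
        by rewrite -[RHS]card_ord; apply: eq_card => i; rewrite !inE z eqxx.
      by rewrite leq_addl.
    lia.
- move=> F [[w hw] [x0 Fx0] hnot].
  set p := wpoly w.
  have ha i : dotv w (ugen d s i) = p.[s i] by rewrite dot_poly.
  have p0 : p != 0.
    apply/negP => /eqP p0; apply: hnot => x hx; apply/hw; split => //.
    move=> y [c' [_ ->]]; case: hx => c [_ ->]; rewrite !dot_sum.
    by rewrite !big1 // => i _; rewrite ha p0 horner0 mulr0.
  exists (fun i => sgnR p.[s i]); split.
    apply: leq_trans (H1 hs p0) _; exact: wpoly_size.
  move=> x; rewrite (Face (w := w)); first by rewrite hw.
  by move=> i; rewrite ha.
- move=> l1 l2 h1 h2; split.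
    have [w hw] := real l2 h2; exact: sub_lam_le hw.
  exact: lam_le_sub.
Qed.
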